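(* Let $r_{\rm A}>0$ and $\theta_{\rm A}\in\,]0,\pi/2[$, and in the plane ${\rm O}xy$ put ${\rm A}=(r_{\rm A}\cos\theta_{\rm A},r_{\rm A}\sin\theta_{\rm A})$ and ${\rm B}=(-r_{\rm A}\cos\theta_{\rm A},r_{\rm A}\sin\theta_{\rm A})$, which are distinct, symmetric with respect to the axis ${\rm O}y$ and have positive ordinate. The direct Keplerian arcs around ${\rm O}$ from ${\rm A}$ to ${\rm B}$ are exactly the arcs of the conics with polar equation $$r=r_{\rm A}\frac{1-\eta\sin\theta_{\rm A}}{1-\eta\sin\theta}$$ traversed with $\theta$ increasing from $\theta_{\rm A}$ to $\pi-\theta_{\rm A}$, one for each value of the ''signed eccentricity'' $\eta\in\,]-\infty,1[$. Their elapsed time is $$T_D^S(\eta)=\int_{\theta_{\rm A}}^{\pi-\theta_{\rm A}}\frac{r_{\rm A}^{3/2}(1-\eta\sin\theta_{\rm A})^{3/2}}{(1-\eta\sin\theta)^2}\,{\rm d}\theta,$$ and $T_D^S$ is an increasing function of $\eta$ on $]-\infty,1[$ with ${\rm d}T_D^S/{\rm d}\eta>0$ everywhere. Moreover $T_D^S(\eta)\to0$ as $\eta\to-\infty$ and $T_D^S(\eta)\to+\infty$ as $\eta\to1^-$.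
   Context: Units are normalized so that the Kepler problem with fixed center ${\rm O}$ (the origin) is $\ddot q=-q/|q|^3$, $q\in\mathbb R^2$ (or $\mathbb R^3$). A Keplerian arc around ${\rm O}$ from ${\rm A}$ to ${\rm B}$ is a solution of this equation restricted to a compact time interval $[t_{\rm A},t_{\rm B}]$, $t_{\rm A}<t_{\rm B}$, with $q(t_{\rm A})={\rm A}$, $q(t_{\rm B})={\rm B}$; its elapsed time is $t_{\rm B}-t_{\rm A}$. An arc is called indirect if its convex hull contains ${\rm O}$, and direct otherwise; for a nonrectilinear arc, direct means that the (positive) polar angle swept along the arc is less than $\pi$. Polar coordinates $(r,\theta)$ are taken with respect to ${\rm O}$ and the axis ${\rm O}x$. The energy is $H=|\dot q|^2/2-1/|q|$. *)

(* Defs.v *)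
From Stdlib Require Import Reals Lra List ClassicalEpsilon.
Open Scope R_scope.

Definition norm2 (x y : R) : R := sqrt (x ^ 2 + y ^ 2).

Definition kepler_arc (x y : R -> R) (tA tB : R) (A B : R * R) : Prop :=
  tA < tB /\ (x tA, y tA) = A /\ (x tB, y tB) = B /\
  exists vx vy : R -> R, forall t, tA <= t <= tB ->
    (x t, y t) <> (0, 0) /\
    derivable_pt_lim x t (vx t) /\ derivable_pt_lim y t (vy t) /\
    derivable_pt_lim vx t (- x t / (norm2 (x t) (y t)) ^ 3) /\
    derivable_pt_lim vy t (- y t / (norm2 (x t) (y t)) ^ 3).

Definition arc_image (x y : R -> R) (tA tB : R) (p : R * R) : Prop :=
  exists t, tA <= t <= tB /\ p = (x t, y t).

Definition in_conv_hull (S : R * R -> Prop) (p : R * R) : Prop :=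
  exists l : list (R * (R * R)),
    Forall (fun c => 0 <= fst c /\ S (snd c)) l /\
    fold_right Rplus 0 (map fst l) = 1 /\
    fold_right Rplus 0 (map (fun c => fst c * fst (snd c)) l) = fst p /\
    fold_right Rplus 0 (map (fun c => fst c * snd (snd c)) l) = snd p.

Definition direct_arc (x y : R -> R) (tA tB : R) : Prop :=
  ~ in_conv_hull (arc_image x y tA tB) (0, 0).

Definition conic_r (rA thA eta th : R) : R :=
  rA * (1 - eta * sin thA) / (1 - eta * sin th).

Definition continuous_on_interval (f : R -> R) (a b : R) : Prop :=
  forall t, a <= t <= b -> forall eps, 0 < eps -> exists d, 0 < d /\
    forall s, a <= s <= b -> Rabs (s - t) < d -> Rabs (f s - f t) < eps.

Definition follows_conic (x y : R -> R) (tA tB rA thA eta : R) : Prop :=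
  exists th : R -> R,
    continuous_on_interval th tA tB /\
    (forall s t, tA <= s -> s < t -> t <= tB -> th s < th t) /\
    th tA = thA /\ th tB = PI - thA /\
    forall t, tA <= t <= tB ->
      x t = conic_r rA thA eta (th t) * cos (th t) /\
      y t = conic_r rA thA eta (th t) * sin (th t).

Definition TDS_integrand (rA thA eta : R) (th : R) : R :=
  Rpower rA (3 / 2) * Rpower (1 - eta * sin thA) (3 / 2) /
  (1 - eta * sin th) ^ 2.

(** Riemann integral as a total function (value chosen by epsilon; its
    meaning is pinned down by integrability asserted in the theorem). *)
Definition Rint (f : R -> R) (a b : R) : R :=
  epsilon (inhabits 0)
    (fun v => exists pr : Riemann_integrable f a b, RiemannInt pr = v).

Definition TDS (rA thA eta : R) : R :=
  Rint (TDS_integrand rA thA eta) thA (PI - thA).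

(* Main.v *)
Require Import Defs.
From Stdlib Require Import Reals Lra List ClassicalEpsilon Lia.
From Coquelicot Require Import Coquelicot.
Open Scope R_scope.


Lemma rp32 x : 0 < x -> Rpower x (3/2) = x * sqrt x.
Proof. intro h. replace (3/2) with (1 + /2) by field.
  rewrite Rpower_plus, Rpower_1, Rpower_sqrt; auto. Qed.

Definition Dt (eta th : R) := 1 - eta * Rabs (sin th).
Definition KK (rA thA eta : R) := Rpower rA (3/2) * Rpower (1 - eta * sin thA) (3/2).
Definition G (rA thA eta th : R) := KK rA thA eta / (Dt eta th) ^ 2.

Lemma Dt_pos eta th : eta < 1 -> 0 < Dt eta th.
Proof. intro h. unfold Dt. assert (0 <= Rabs (sin th) <= 1).
  { split. apply Rabs_pos. apply Rabs_le. apply SIN_bound. }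
  destruct (Rle_lt_dec 0 eta); nra. Qed.

Lemma Dt_le eta th : Dt eta th <= 1 + Rabs eta.
Proof. unfold Dt. assert (0 <= Rabs (sin th) <= 1).
  { split. apply Rabs_pos. apply Rabs_le. apply SIN_bound. }
  destruct (Rle_lt_dec 0 eta). rewrite (Rabs_right eta) by lra.
  assert (0 <= eta * Rabs (sin th)) by (apply Rmult_le_pos; lra). lra.
  rewrite (Rabs_left eta) by lra.
  assert (0 <= (-eta)*(1 - Rabs (sin th))) by (apply Rmult_le_pos; lra). nra. Qed.

Lemma continuous_sin x : continuous sin x.
Proof. apply continuity_pt_filterlim, continuity_sin. Qed.

Lemma Dt_cont eta x : continuous (Dt eta) x.
Proof. unfold Dt.
  apply (continuous_minus (fun _ => 1) (fun x => eta * Rabs (sin x))).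
  apply continuous_const.
  apply (continuous_mult (fun _ => eta) (fun x => Rabs (sin x))).
  apply continuous_const. apply continuous_Rabs_comp. apply continuous_sin. Qed.

Lemma G_cont rA thA eta x : eta < 1 -> continuous (G rA thA eta) x.
Proof. intro h. unfold G.
  apply (continuous_mult (fun _ => KK rA thA eta) (fun x => / (Dt eta x)^2)).
  apply continuous_const.
  apply (continuous_Rinv_comp (fun x => Dt eta x ^ 2)).
  simpl. apply (continuous_mult (fun x => Dt eta x) (fun x => Dt eta x * 1)).
  apply Dt_cont.
  apply (continuous_mult (fun x => Dt eta x) (fun x => 1)). apply Dt_cont. apply continuous_const.
  generalize (Dt_pos eta x h); intro; nra. Qed.

Lemma sin_thA_bounds thA : 0 < thA < PI/2 -> 0 < sin thA < 1.
Proof. intro h. split. apply sin_gt_0; lra.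
  rewrite <- sin_PI2. apply sin_increasing_1; lra. Qed.

Lemma u_pos thA eta : 0 < thA < PI/2 -> eta < 1 -> 0 < 1 - eta * sin thA.
Proof. intros h he. pose proof (sin_thA_bounds thA h).
  destruct (Rle_lt_dec 0 eta); nra. Qed.

Lemma sin_nonneg_mid thA th : 0 < thA < PI/2 -> thA <= th <= PI - thA -> 0 <= sin th.
Proof. intros. apply sin_ge_0; lra. Qed.

Lemma integrand_G rA thA eta th : 0 <= sin th ->
  TDS_integrand rA thA eta th = G rA thA eta th.
Proof. intro h. unfold TDS_integrand, G, KK, Dt. rewrite Rabs_right by lra. reflexivity. Qed.

Lemma ex_RInt_G rA thA eta a b : eta < 1 -> ex_RInt (G rA thA eta) a b.
Proof. intro. apply (ex_RInt_continuous (V:=R_CompleteNormedModule)). intros. apply G_cont; auto. Qed.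

Lemma TDS_facts rA thA eta : 0 < thA < PI/2 -> eta < 1 ->
  (exists pr : Riemann_integrable (TDS_integrand rA thA eta) thA (PI - thA),
       RiemannInt pr = TDS rA thA eta) /\
  TDS rA thA eta = RInt (G rA thA eta) thA (PI - thA).
Proof. intros h he.
  assert (E : ex_RInt (TDS_integrand rA thA eta) thA (PI - thA)).
  { apply ex_RInt_ext with (G rA thA eta). intros x Hx.
    rewrite Rmin_left in Hx by lra. rewrite Rmax_right in Hx by lra.
    symmetry; apply integrand_G. apply (sin_nonneg_mid thA); lra.
    apply ex_RInt_G; auto. }
  pose proof (ex_RInt_Reals_0 _ _ _ E) as pr.
  assert (H : exists v, exists pr : Riemann_integrable (TDS_integrand rA thA eta) thA (PI - thA),
       RiemannInt pr = v) by (exists (RiemannInt pr); exists pr; auto).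
  pose proof (epsilon_spec (inhabits 0) _ H) as [pr' Hpr'].
  fold (Rint (TDS_integrand rA thA eta) thA (PI - thA)) in Hpr'.
  fold (TDS rA thA eta) in Hpr'.
  split. exists pr'; auto.
  rewrite <- Hpr', <- RInt_Reals. apply RInt_ext. intros x Hx.
    rewrite Rmin_left in Hx by lra. rewrite Rmax_right in Hx by lra.
    apply integrand_G. apply (sin_nonneg_mid thA); lra.
Qed.

Lemma deriv_cont (f : R -> R) x l : is_derive f x l -> continuity_pt f x.
Proof. intro h. apply continuity_pt_filterlim.
  apply (ex_derive_continuous (K:=R_AbsRing) (V:=R_NormedModule)). exists l; auto. Qed.

Lemma deriv_continuous (f : R -> R) x l : is_derive f x l -> continuous f x.
Proof. intro h. apply (ex_derive_continuous (K:=R_AbsRing) (V:=R_NormedModule)). exists l; auto. Qed.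

Definition Tf (rA thA eta th : R) := RInt (G rA thA eta) thA th.

Lemma KK_pos rA thA eta : 0 < KK rA thA eta.
Proof. unfold KK, Rpower. apply Rmult_lt_0_compat; apply exp_pos. Qed.

Lemma G_pos rA thA eta th : eta < 1 -> 0 < G rA thA eta th.
Proof. intro. unfold G. pose proof (KK_pos rA thA eta). pose proof (Dt_pos eta th H).
  apply Rdiv_lt_0_compat; auto. apply pow_lt; auto. Qed.

Lemma G_lb rA thA eta th : eta < 1 -> KK rA thA eta / (1 + Rabs eta)^2 <= G rA thA eta th.
Proof. intro. unfold G. pose proof (KK_pos rA thA eta). pose proof (Dt_pos eta th H).
  pose proof (Dt_le eta th). unfold Rdiv. apply Rmult_le_compat_l. lra.
  apply Rinv_le_contravar. apply pow_lt; lra. apply pow_incr; lra. Qed.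

Lemma Tf_deriv rA thA eta x : eta < 1 -> is_derive (Tf rA thA eta) x (G rA thA eta x).
Proof. intro. unfold Tf. apply (is_derive_RInt (V:=R_CompleteNormedModule) _ _ thA).
  apply filter_forall. intro b. apply (RInt_correct (V:=R_CompleteNormedModule)). apply ex_RInt_G; auto.
  apply G_cont; auto. Qed.

Lemma Tf_diff rA thA eta a b : eta < 1 -> Tf rA thA eta b - Tf rA thA eta a = RInt (G rA thA eta) a b.
Proof. intro. unfold Tf.
  rewrite <- (RInt_Chasles (V:=R_CompleteNormedModule) (G rA thA eta) thA a b) by (apply ex_RInt_G; auto).
  simpl. unfold plus; simpl. ring. Qed.

Lemma Tf_strict rA thA eta a b : eta < 1 -> a < b -> Tf rA thA eta a < Tf rA thA eta b.
Proof. intros. assert (0 < RInt (G rA thA eta) a b).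
  apply RInt_gt_0; auto. intros; apply G_pos; auto. intros; apply G_cont; auto.
  rewrite <- Tf_diff in H1; auto. lra. Qed.

Lemma Tf_inj rA thA eta a b : eta < 1 -> Tf rA thA eta a = Tf rA thA eta b -> a = b.
Proof. intros. destruct (Rtotal_order a b) as [h|[h|h]]; auto.
  apply (Tf_strict rA thA eta) in h; auto; lra.
  apply (Tf_strict rA thA eta) in h; auto; lra. Qed.

Lemma Tf_lin rA thA eta a b : eta < 1 -> a <= b ->
  (KK rA thA eta / (1 + Rabs eta)^2) * (b - a) <= Tf rA thA eta b - Tf rA thA eta a.
Proof. intros. rewrite Tf_diff; auto.
  set (m := KK rA thA eta / (1 + Rabs eta)^2).
  assert (RInt (fun _ => m) a b <= RInt (G rA thA eta) a b).
  { apply RInt_le; auto. apply ex_RInt_const. apply ex_RInt_G; auto.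
    intros; apply G_lb; auto. }
  rewrite RInt_const in H1. simpl in H1. unfold scal in H1; simpl in H1. unfold mult in H1; simpl in H1. lra. Qed.

Lemma Tf_surj rA thA eta t : eta < 1 -> exists th, Tf rA thA eta th = t.
Proof. intro he.
  set (m := KK rA thA eta / (1 + Rabs eta)^2).
  assert (hm : 0 < m). { unfold m. apply Rdiv_lt_0_compat. apply KK_pos. apply pow_lt.
    pose proof (Rabs_pos eta); lra. }
  assert (T0 : Tf rA thA eta thA = 0). { unfold Tf. rewrite RInt_point. reflexivity. }
  set (a := thA - (Rabs t / m + 1)). set (b := thA + (Rabs t / m + 1)).
  assert (hq : 0 <= Rabs t / m) by (apply Rdiv_le_0_compat; auto; apply Rabs_pos).
  assert (Ha := Tf_lin rA thA eta a thA he ltac:(unfold a; lra)).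
  assert (Hb := Tf_lin rA thA eta thA b he ltac:(unfold b; lra)).
  fold m in Ha, Hb. rewrite T0 in Ha, Hb.
  assert (e1 : m * (thA - a) = Rabs t + m) by (unfold a; field; lra).
  assert (e2 : m * (b - thA) = Rabs t + m) by (unfold b; field; lra).
  pose proof (Rle_abs t).
  assert (Tf rA thA eta a < t) by (pose proof (Rabs_pos t); pose proof (Rle_abs (-t)); rewrite Rabs_Ropp in *; lra).
  assert (t < Tf rA thA eta b) by lra.
  destruct (IVT_gen (Tf rA thA eta) a b t) as [x [_ Hx]].
  { intro x. apply (deriv_cont _ _ (G rA thA eta x)). apply Tf_deriv; auto. }
  rewrite Rmin_left, Rmax_right; lra.
  exists x; auto. Qed.

Definition Tinv (rA thA eta t : R) := epsilon (inhabits 0) (fun th => Tf rA thA eta th = t).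

Lemma Tinv_spec rA thA eta t : eta < 1 -> Tf rA thA eta (Tinv rA thA eta t) = t.
Proof. intro. unfold Tinv. apply (epsilon_spec (inhabits 0) (fun th => Tf rA thA eta th = t)).
  apply Tf_surj; auto. Qed.

Lemma Tinv_Tf rA thA eta th : eta < 1 -> Tinv rA thA eta (Tf rA thA eta th) = th.
Proof. intro. apply (Tf_inj rA thA eta); auto. apply Tinv_spec; auto. Qed.

Lemma Tinv_strict rA thA eta t1 t2 : eta < 1 -> t1 < t2 -> Tinv rA thA eta t1 < Tinv rA thA eta t2.
Proof. intros. destruct (Rlt_le_dec (Tinv rA thA eta t1) (Tinv rA thA eta t2)); auto.
  exfalso. destruct r. apply (Tf_strict rA thA eta) in H1; auto. rewrite !Tinv_spec in H1; auto. lra.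
  apply (f_equal (Tf rA thA eta)) in H1. rewrite !Tinv_spec in H1; auto. lra. Qed.

Lemma Tinv_le rA thA eta t1 t2 : eta < 1 -> t1 <= t2 -> Tinv rA thA eta t1 <= Tinv rA thA eta t2.
Proof. intros. destruct H0. left; apply Tinv_strict; auto. subst; lra. Qed.

Definition Tder rA thA eta (he : eta < 1) : forall a, derivable_pt (Tf rA thA eta) a :=
  fun a => exist _ (G rA thA eta a) (proj1 (is_derive_Reals _ _ _) (Tf_deriv rA thA eta a he)).

Lemma Tinv_cont rA thA eta t : eta < 1 -> continuity_pt (Tinv rA thA eta) t.
Proof. intro he. set (g := Tinv rA thA eta). set (f := Tf rA thA eta).
  apply (Ranalysis5.continuity_pt_recip_interv f g (g t - 1) (g t + 1)); try lra.
  - intros; apply Tf_strict; auto.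
  - intros; unfold comp, id, f, g; apply Tinv_spec; auto.
  - intros. split.
    + rewrite <- (Tinv_Tf rA thA eta (g t - 1)); auto. apply Tinv_le; auto.
    + rewrite <- (Tinv_Tf rA thA eta (g t + 1)); auto. apply Tinv_le; auto.
  - intros. apply (deriv_cont _ _ (G rA thA eta a)). apply Tf_deriv; auto.
  - split; unfold f, g.
    + rewrite <- (Tinv_spec rA thA eta t) at 2; auto. apply Tf_strict; auto; lra.
    + rewrite <- (Tinv_spec rA thA eta t) at 1; auto. apply Tf_strict; auto; lra.
Qed.

Lemma Tinv_deriv rA thA eta t : eta < 1 ->
  is_derive (Tinv rA thA eta) t (1 / G rA thA eta (Tinv rA thA eta t)).
Proof. intro he. apply is_derive_Reals.
  set (g := Tinv rA thA eta). set (f := Tf rA thA eta).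
  assert (Hi : g (t - 1) <= g t <= g (t + 1)) by (split; apply Tinv_le; auto; lra).
  pose proof (Ranalysis5.derivable_pt_lim_recip_interv f g (t-1) (t+1) t
    (fun a _ => Tder rA thA eta he a) (Tinv_cont rA thA eta t he) ltac:(lra) ltac:(lra) Hi) as H.
  simpl in H. apply H.
  - intros; unfold comp, id, f, g; apply Tinv_spec; auto.
  - pose proof (G_pos rA thA eta (g t) he). lra.
Qed.


Lemma hull_sum_aux (Sx : R*R -> Prop) (l : list (R * (R * R))) :
  (forall p, Sx p -> 0 < snd p) ->
  List.Forall (fun c => 0 <= fst c /\ Sx (snd c)) l ->
  0 <= fold_right Rplus 0 (map (fun c => fst c * snd (snd c)) l) /\
  (fold_right Rplus 0 (map (fun c => fst c * snd (snd c)) l) = 0 ->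
   fold_right Rplus 0 (map fst l) = 0).
Proof. intros HS Hl. induction Hl as [|[lam [px py]] l [h1 h2] Hl IH]; simpl in *.
  - lra.
  - apply HS in h2. simpl in h2. destruct IH as [I1 I2].
    assert (0 <= lam * py) by (apply Rmult_le_pos; lra).
    split. lra. intro E. assert (lam * py = 0) by lra.
    assert (lam = 0) by (destruct (Rmult_integral _ _ H0); lra).
    rewrite I2 by lra. lra. Qed.

Lemma hull_pos_y (Sx : R*R -> Prop) : (forall p, Sx p -> 0 < snd p) -> ~ in_conv_hull Sx (0,0).
Proof. intros HS [l [Hl [H1 [H2 H3]]]]. simpl in H3.
  destruct (hull_sum_aux Sx l HS Hl) as [_ I]. rewrite I in H1 by auto. lra. Qed.

Lemma hull_opp (Sx : R*R -> Prop) a b k1 k2 :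
  Sx (k1*a, k1*b) -> Sx (-(k2*a), -(k2*b)) -> 0 < k1 -> 0 < k2 -> in_conv_hull Sx (0,0).
Proof. intros H1 H2 h1 h2.
  exists ((k2/(k1+k2), (k1*a, k1*b)) :: (k1/(k1+k2), (-(k2*a), -(k2*b))) :: nil).
  repeat split.
  - constructor. split; simpl; auto. apply Rlt_le, Rdiv_lt_0_compat; lra.
    constructor. split; simpl; auto. apply Rlt_le, Rdiv_lt_0_compat; lra. constructor.
  - simpl. field. lra.
  - simpl. field. lra.
  - simpl. field. lra.
Qed.

Lemma norm2_polar rr th : 0 < rr -> norm2 (rr * cos th) (rr * sin th) = rr.
Proof. intro. unfold norm2.
  replace ((rr * cos th) ^ 2 + (rr * sin th) ^ 2) with (rr ^ 2).
  apply sqrt_pow2; lra.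
  pose proof (sin2_cos2 th). unfold Rsqr in H0. nra. Qed.

Lemma KK_c rA thA eta : 0 < rA -> 0 < 1 - eta * sin thA ->
  KK rA thA eta = (rA * (1 - eta * sin thA)) * sqrt (rA * (1 - eta * sin thA)).
Proof. intros. unfold KK. rewrite Rpower_mult_distr by auto. apply rp32. nra. Qed.

Lemma X_der p eta th : 1 - eta*sin th <> 0 ->
  is_derive (fun th => p*cos th/(1-eta*sin th)) th (p*(eta - sin th)/(1-eta*sin th)^2).
Proof. intro. auto_derive. auto. pose proof (sin2_cos2 th). unfold Rsqr in H0.
  field_simplify; auto. f_equal. replace (cos th ^ 2) with (1 - sin th ^ 2) by nra. ring. Qed.

Lemma Y_der p eta th : 1 - eta*sin th <> 0 ->
  is_derive (fun th => p*sin th/(1-eta*sin th)) th (p*cos th/(1-eta*sin th)^2).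
Proof. intro. auto_derive. auto. field. auto. Qed.

Lemma isd_eq (f : R -> R) x l l' : is_derive f x l -> l = l' -> derivable_pt_lim f x l'.
Proof. intros h e. subst. apply is_derive_Reals; auto. Qed.

Lemma cont_interval (f : R -> R) a b : (forall t, a <= t <= b -> continuity_pt f t) ->
  continuous_on_interval f a b.
Proof. intros H t Ht eps heps.
  destruct (proj1 (continuity_pt_locally f t) (H t Ht) (mkposreal eps heps)) as [d Hd].
  exists d. split. apply cond_pos. intros s Hs Hst. apply (Hd s). apply Hst. Qed.

Lemma Tf_thA rA thA eta : Tf rA thA eta thA = 0.
Proof. unfold Tf. rewrite RInt_point. reflexivity. Qed.

Lemma Vx_der eta c th : c <> 0 -> is_derive (fun th => (eta - sin th)/c) th (- cos th / c).
Proof. intro. auto_derive. auto. field. auto. Qed.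
Lemma Vy_der c th : c <> 0 -> is_derive (fun th => cos th/c) th (- sin th / c).
Proof. intro. auto_derive. auto. field. auto. Qed.

Lemma existence rA thA eta : 0 < rA -> 0 < thA < PI/2 -> eta < 1 ->
  exists (x y : R -> R) (tA tB : R),
    kepler_arc x y tA tB (rA * cos thA, rA * sin thA) (- (rA * cos thA), rA * sin thA) /\
    direct_arc x y tA tB /\ follows_conic x y tA tB rA thA eta.
Proof.
  intros hr hth he.
  pose proof (sin_thA_bounds thA hth) as hs.
  pose proof (u_pos thA eta hth he) as hu.
  set (s := sin thA) in *.
  set (p := rA * (1 - eta*s)). assert (hp : 0 < p) by (unfold p; nra).
  set (c := sqrt p). assert (hc: 0 < c) by (apply sqrt_lt_R0; auto).
  assert (hcc : c * c = p) by (apply sqrt_sqrt; lra).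
  set (ph := Tinv rA thA eta).
  set (tB := Tf rA thA eta (PI - thA)).
  pose proof PI_RGT_0 as hpi.
  assert (htB : 0 < tB) by (rewrite <- (Tf_thA rA thA eta); apply Tf_strict; lra).
  assert (ph0 : ph 0 = thA) by (rewrite <- (Tf_thA rA thA eta); apply Tinv_Tf; auto).
  assert (phB : ph tB = PI - thA) by (apply Tinv_Tf; auto).
  assert (phr : forall t, 0 <= t <= tB -> thA <= ph t <= PI - thA).
  { intros t Ht. rewrite <- phB. rewrite <- ph0 at 1. split; apply Tinv_le; tauto. }
  assert (sinpos : forall t, 0 <= t <= tB -> 0 < sin (ph t)).
  { intros t Ht. apply sin_gt_0; pose proof (phr t Ht); lra. }
  assert (Dpos : forall t, 0 <= t <= tB -> 0 < 1 - eta * sin (ph t)).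
  { intros t Ht. pose proof (Dt_pos eta (ph t) he). unfold Dt in H.
    rewrite Rabs_right in H; auto. pose proof (sinpos t Ht); lra. }
  assert (phd : forall t, 0 <= t <= tB ->
    is_derive ph t ((1 - eta * sin (ph t))^2 / (p * c))).
  { intros t Ht. pose proof (Tinv_deriv rA thA eta t he) as H. fold ph in H.
    replace ((1 - eta * sin (ph t))^2 / (p * c)) with (1 / G rA thA eta (ph t)); auto.
    unfold G, Dt. rewrite KK_c by auto. rewrite Rabs_right by (pose proof (sinpos t Ht); lra).
    fold s p c. pose proof (Dpos t Ht). field. split; lra. }
  exists (fun t => p * cos (ph t) / (1 - eta * sin (ph t))),
         (fun t => p * sin (ph t) / (1 - eta * sin (ph t))), 0, tB.
  split; [|split].
  -
    split; auto. split; [|split].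
    + cbv beta. rewrite ph0. fold s. f_equal; unfold p; field; lra.
    + cbv beta. rewrite phB. rewrite Rtrigo_facts.cos_pi_minus, sin_PI_x. fold s. f_equal; unfold p; field; lra.
    + exists (fun t => (eta - sin (ph t)) / c), (fun t => cos (ph t) / c).
      intros t Ht. pose proof (Dpos t Ht) as hD. pose proof (sinpos t Ht) as hS.
      pose proof (phd t Ht) as hph.
      assert (Hn : norm2 (p * cos (ph t) / (1 - eta * sin (ph t))) (p * sin (ph t) / (1 - eta * sin (ph t)))
                 = p / (1 - eta * sin (ph t))).
      { rewrite <- norm2_polar with (th := ph t). f_equal; field; lra.
        apply Rdiv_lt_0_compat; auto. }
      split; [|split; [|split; [|split]]].
      * intro E. injection E; intros E1 E2.
        assert (0 < p * sin (ph t) / (1 - eta * sin (ph t))) by (apply Rdiv_lt_0_compat; nra). lra.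
      * eapply isd_eq. apply (is_derive_comp (fun th => p*cos th/(1-eta*sin th)) ph).
        apply X_der; lra. apply hph. simpl. unfold scal; simpl; unfold mult; simpl.
        field. repeat split; lra.
      * eapply isd_eq. apply (is_derive_comp (fun th => p*sin th/(1-eta*sin th)) ph).
        apply Y_der; lra. apply hph. simpl. unfold scal; simpl; unfold mult; simpl.
        field. repeat split; lra.
      * eapply isd_eq. apply (is_derive_comp (fun th => (eta - sin th)/c) ph).
        apply Vx_der; lra. apply hph. simpl. unfold scal; simpl; unfold mult; simpl.
        rewrite Hn. rewrite <- hcc. field. split; lra.
      * eapply isd_eq. apply (is_derive_comp (fun th => cos th/c) ph).
        apply Vy_der; lra. apply hph. simpl. unfold scal; simpl; unfold mult; simpl.
        rewrite Hn. rewrite <- hcc. field. split; lra.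
  -
    unfold direct_arc. apply hull_pos_y. intros q [t [Ht Hq]]. subst q. simpl.
    apply Rdiv_lt_0_compat. pose proof (sinpos t Ht); nra. auto.
  - exists ph. split; [|split; [|split; [|split]]].
    + apply cont_interval. intros; apply Tinv_cont; auto.
    + intros. apply Tinv_strict; auto.
    + auto.
    + auto.
    + intros t Ht. unfold conic_r. fold s. pose proof (Dpos t Ht). split; unfold p; field; lra.
Qed.


Ltac feq := match goal with |- ?a = ?b => change (@eq R a b) end.
Lemma D_eq (f : R -> R) x l l' : is_derive f x l -> l = l' -> is_derive f x l'.
Proof. intros; subst; auto. Qed.
Lemma D_mult (f g : R -> R) t a b : is_derive f t a -> is_derive g t b ->
  is_derive (fun t => f t * g t) t (a * g t + f t * b).
Proof. intros. apply (is_derive_mult f g); auto. intros; apply Rmult_comm. Qed.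
Lemma D_plus (f g : R -> R) t a b : is_derive f t a -> is_derive g t b ->
  is_derive (fun t => f t + g t) t (a + b).
Proof. intros. apply (is_derive_plus f g); auto. Qed.
Lemma D_minus (f g : R -> R) t a b : is_derive f t a -> is_derive g t b ->
  is_derive (fun t => f t - g t) t (a - b).
Proof. intros. apply (is_derive_minus f g); auto. Qed.
Lemma D_div (f g : R -> R) t a b : is_derive f t a -> is_derive g t b -> g t <> 0 ->
  is_derive (fun t => f t / g t) t ((a * g t - f t * b) / g t ^ 2).
Proof. intros. apply (is_derive_div f g); auto. Qed.
Lemma D_sqrt (f : R -> R) t a : is_derive f t a -> 0 < f t ->
  is_derive (fun t => sqrt (f t)) t (a / (2 * sqrt (f t))).
Proof. intros. apply (is_derive_sqrt f); auto. Qed.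
Lemma D_const (k : R) t : is_derive (fun _ => k) t 0.
Proof. apply (is_derive_const k). Qed.
Lemma D_cos (f : R -> R) t a : is_derive f t a -> is_derive (fun t => cos (f t)) t (- sin (f t) * a).
Proof. intro. eapply D_eq. apply (is_derive_comp cos f t (- sin (f t)) a). apply is_derive_Reals, derivable_pt_lim_cos. auto.
  simpl. unfold scal; simpl; unfold mult; simpl. apply Rmult_comm. Qed.
Lemma D_sin (f : R -> R) t a : is_derive f t a -> is_derive (fun t => sin (f t)) t (cos (f t) * a).
Proof. intro. eapply D_eq. apply (is_derive_comp sin f t (cos (f t)) a). apply is_derive_Reals, derivable_pt_lim_sin. auto.
  simpl. unfold scal; simpl; unfold mult; simpl. apply Rmult_comm. Qed.

Lemma const_on (f : R -> R) a b : (forall t, a <= t <= b -> is_derive f t 0) ->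
  forall t, a <= t <= b -> f t = f a.
Proof. intros H t Ht. destruct (Req_dec t a). subst; auto.
  symmetry. apply (eq_is_derive f a t). intros s Hs. apply H. lra. lra. Qed.

Section Arc.
Variables (x y vx vy : R -> R) (tA tB th0 : R).
Hypothesis Htab : tA < tB.
Hypothesis HK : forall t, tA <= t <= tB ->
    (x t, y t) <> (0, 0) /\
    derivable_pt_lim x t (vx t) /\ derivable_pt_lim y t (vy t) /\
    derivable_pt_lim vx t (- x t / (norm2 (x t) (y t)) ^ 3) /\
    derivable_pt_lim vy t (- y t / (norm2 (x t) (y t)) ^ 3).

Definition rr t := norm2 (x t) (y t).

Lemma q_pos t : tA <= t <= tB -> 0 < x t ^ 2 + y t ^ 2.
Proof. intro Ht. destruct (HK t Ht) as [Hn _].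
  destruct (Req_dec (x t) 0) as [h1|h1]. destruct (Req_dec (y t) 0) as [h2|h2].
  exfalso; apply Hn; rewrite h1, h2; auto. nra. nra. Qed.

Lemma rr_pos t : tA <= t <= tB -> 0 < rr t.
Proof. intro. unfold rr, norm2. apply sqrt_lt_R0. apply q_pos; auto. Qed.

Lemma rr_sq t : tA <= t <= tB -> rr t ^ 2 = x t ^ 2 + y t ^ 2.
Proof. intro. unfold rr, norm2. apply pow2_sqrt. pose proof (q_pos t H); lra. Qed.

Lemma dx t : tA <= t <= tB -> is_derive x t (vx t).
Proof. intro. apply is_derive_Reals. apply HK; auto. Qed.
Lemma dy t : tA <= t <= tB -> is_derive y t (vy t).
Proof. intro. apply is_derive_Reals. apply HK; auto. Qed.
Lemma dvx t : tA <= t <= tB -> is_derive vx t (- x t / rr t ^ 3).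
Proof. intro. apply is_derive_Reals. apply HK; auto. Qed.
Lemma dvy t : tA <= t <= tB -> is_derive vy t (- y t / rr t ^ 3).
Proof. intro. apply is_derive_Reals. apply HK; auto. Qed.

Lemma drr t : tA <= t <= tB -> is_derive rr t ((x t * vx t + y t * vy t) / rr t).
Proof. intro Ht. unfold rr at 1, norm2.
  eapply D_eq. apply (D_sqrt (fun t => x t ^ 2 + y t ^ 2)).
  apply D_plus; apply (is_derive_pow _ 2); [apply dx|apply dy]; auto.
  apply q_pos; auto. fold (norm2 (x t) (y t)). fold (rr t).
  pose proof (rr_pos t Ht). simpl. field. lra. Qed.

Definition cc t := x t * vy t - y t * vx t.

Lemma dcc t : tA <= t <= tB -> is_derive cc t 0.
Proof. intro Ht. unfold cc. eapply D_eq. apply D_minus; apply D_mult.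
  apply dx; auto. apply dvy; auto. apply dy; auto. apply dvx; auto.
  feq. pose proof (rr_pos t Ht). field. lra. Qed.

Definition c0 := cc tA.
Lemma cc_const t : tA <= t <= tB -> cc t = c0.
Proof. intro. apply (const_on cc tA tB); auto. intros; apply dcc; auto. Qed.

Definition ux t := x t / rr t.
Definition uy t := y t / rr t.

Lemma dux t : tA <= t <= tB -> is_derive ux t (- y t * c0 / rr t ^ 3).
Proof. intro Ht. unfold ux. eapply D_eq. apply D_div. apply dx; auto. apply drr; auto.
  pose proof (rr_pos t Ht); lra.
  pose proof (rr_pos t Ht). rewrite <- (cc_const t Ht). unfold cc. feq.
  transitivity ((vx t * rr t ^ 2 - x t * (x t * vx t + y t * vy t)) / rr t ^ 3). field. lra.
  rewrite rr_sq by auto. field. lra. Qed.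

Lemma duy t : tA <= t <= tB -> is_derive uy t (x t * c0 / rr t ^ 3).
Proof. intro Ht. unfold uy. eapply D_eq. apply D_div. apply dy; auto. apply drr; auto.
  pose proof (rr_pos t Ht); lra.
  pose proof (rr_pos t Ht). rewrite <- (cc_const t Ht). unfold cc. feq.
  transitivity ((vy t * rr t ^ 2 - y t * (x t * vx t + y t * vy t)) / rr t ^ 3). field. lra.
  rewrite rr_sq by auto. field. lra. Qed.

Definition ex t := c0 * vy t - ux t.
Definition ey t := - c0 * vx t - uy t.

Lemma ex_const t : tA <= t <= tB -> ex t = ex tA.
Proof. apply (const_on ex tA tB). intros s Hs. unfold ex. eapply D_eq.
  apply D_minus. apply (is_derive_scal vy). apply dvy; auto. apply dux; auto.
  feq. pose proof (rr_pos s Hs). field. lra. Qed.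

Lemma ey_const t : tA <= t <= tB -> ey t = ey tA.
Proof. apply (const_on ey tA tB). intros s Hs. unfold ey. eapply D_eq.
  apply D_minus. apply (is_derive_scal vx). apply dvx; auto. apply duy; auto.
  feq. pose proof (rr_pos s Hs). field. lra. Qed.

Lemma lrl_id t : tA <= t <= tB -> x t * ex t + y t * ey t = c0 ^ 2 - rr t.
Proof. intro Ht. pose proof (rr_pos t Ht). pose proof (rr_sq t Ht).
  pose proof (cc_const t Ht). unfold cc in H1. unfold ex, ey, ux, uy.
  transitivity (c0 * (x t * vy t - y t * vx t) - (x t ^ 2 + y t ^ 2) / rr t). field. lra.
  rewrite H1, <- H0. field. lra. Qed.

Definition kap t := / 2 * (tA + tB + Rabs (t - tA) - Rabs (t - tB)).
Lemma kap_in t : tA <= kap t <= tB.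
Proof. unfold kap. unfold Rabs. destruct (Rcase_abs (t - tA)), (Rcase_abs (t - tB)); lra. Qed.
Lemma kap_id t : tA <= t <= tB -> kap t = t.
Proof. intro. unfold kap. rewrite (Rabs_right (t - tA)) by lra. rewrite (Rabs_left1 (t - tB)) by lra. field. Qed.

Lemma cont_minus (f g : R -> R) t : continuous f t -> continuous g t -> continuous (fun t => f t - g t) t.
Proof. intros. apply (continuous_minus f g); auto. Qed.
Lemma cont_plus (f g : R -> R) t : continuous f t -> continuous g t -> continuous (fun t => f t + g t) t.
Proof. intros. apply (continuous_plus f g); auto. Qed.
Lemma cont_mult (f g : R -> R) t : continuous f t -> continuous g t -> continuous (fun t => f t * g t) t.
Proof. intros. apply (continuous_mult f g); auto. Qed.
Lemma cont_sq (f : R -> R) t : continuous f t -> continuous (fun t => f t ^ 2) t.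
Proof. intros. simpl. apply cont_mult; auto. apply cont_mult; auto. apply continuous_const. Qed.

Lemma kap_cont t : continuous kap t.
Proof. unfold kap. apply cont_mult. apply continuous_const.
  apply cont_minus. apply cont_plus. apply continuous_const.
  apply continuous_Rabs_comp. apply cont_minus. apply continuous_id. apply continuous_const.
  apply continuous_Rabs_comp. apply cont_minus. apply continuous_id. apply continuous_const. Qed.

Definition hh t := c0 / (x (kap t) ^ 2 + y (kap t) ^ 2).

Lemma hh_cont t : continuous hh t.
Proof. unfold hh. apply cont_mult. apply continuous_const.
  apply (continuous_Rinv_comp (fun t => x (kap t) ^ 2 + y (kap t) ^ 2)).
  apply cont_plus; apply cont_sq; apply (continuous_comp kap); try apply kap_cont.
  apply (deriv_continuous _ _ (vx (kap t))), dx, kap_in.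
  apply (deriv_continuous _ _ (vy (kap t))), dy, kap_in.
  pose proof (q_pos (kap t) (kap_in t)). lra. Qed.

Lemma hh_val t : tA <= t <= tB -> hh t = c0 / rr t ^ 2.
Proof. intro. unfold hh. rewrite kap_id, rr_sq; auto. Qed.

Lemma ex_RInt_hh a b : ex_RInt hh a b.
Proof. apply (ex_RInt_continuous (V:=R_CompleteNormedModule)). intros; apply hh_cont. Qed.

Definition phi t := th0 + RInt hh tA t.

Lemma dphi t : is_derive phi t (hh t).
Proof. unfold phi. eapply D_eq. apply D_plus. apply D_const.
  apply (is_derive_RInt (V:=R_CompleteNormedModule) hh (RInt hh tA) tA).
  apply filter_forall. intro b. apply (RInt_correct (V:=R_CompleteNormedModule)). apply ex_RInt_hh.
  apply hh_cont. feq. ring. Qed.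

Lemma phi_diff a b : phi b - phi a = RInt hh a b.
Proof. unfold phi.
  rewrite <- (RInt_Chasles (V:=R_CompleteNormedModule) hh tA a b) by apply ex_RInt_hh.
  simpl. unfold plus; simpl. ring. Qed.

Lemma phi_tA : phi tA = th0.
Proof. unfold phi. rewrite RInt_point. simpl. unfold zero; simpl. ring. Qed.

Hypothesis Hinit : x tA = rr tA * cos th0 /\ y tA = rr tA * sin th0.

Definition gg t := ux t * cos (phi t) + uy t * sin (phi t).

Lemma gg_const t : tA <= t <= tB -> gg t = 1.
Proof. intro Ht. replace 1 with (gg tA).
  apply (const_on gg tA tB); auto. intros s Hs. unfold gg. eapply D_eq.
  apply D_plus; apply D_mult. apply dux; auto. apply D_cos, dphi. apply duy; auto. apply D_sin, dphi.
  feq. rewrite hh_val by auto. unfold ux, uy. pose proof (rr_pos s Hs). field. lra.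
  unfold gg, ux, uy. rewrite phi_tA. destruct Hinit as [h1 h2]. rewrite h1, h2.
  assert (0 < rr tA) by (apply rr_pos; lra). pose proof (sin2_cos2 th0). unfold Rsqr in H0.
  field_simplify. nra. lra. Qed.

Lemma polar t : tA <= t <= tB -> x t = rr t * cos (phi t) /\ y t = rr t * sin (phi t).
Proof. intro Ht. pose proof (gg_const t Ht) as G1. unfold gg in G1.
  pose proof (rr_pos t Ht). pose proof (rr_sq t Ht).
  assert (U : ux t ^ 2 + uy t ^ 2 = 1). { unfold ux, uy. transitivity ((x t ^ 2 + y t ^ 2) / rr t ^ 2). field. lra. rewrite <- H0. field. lra. }
  pose proof (sin2_cos2 (phi t)). unfold Rsqr in H1.
  assert (E : (ux t - cos (phi t))^2 + (uy t - sin (phi t))^2 = 0) by nra.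
  pose proof (pow2_ge_0 (ux t - cos (phi t))). pose proof (pow2_ge_0 (uy t - sin (phi t))).
  assert (E1 : ux t = cos (phi t)).
  { assert ((ux t - cos (phi t))^2 = 0) by lra. assert (HH := Rsqr_eq_0 (ux t - cos (phi t))); unfold Rsqr in HH; simpl in H4; lra. }
  assert (E2 : uy t = sin (phi t)).
  { assert ((uy t - sin (phi t))^2 = 0) by lra. assert (HH := Rsqr_eq_0 (uy t - sin (phi t))); unfold Rsqr in HH; simpl in H4; lra. }
  unfold ux, uy in *. split.
  rewrite <- E1. field. lra. rewrite <- E2. field. lra. Qed.
End Arc.


Lemma RInt_neg (h : R -> R) a b : a < b -> (forall t, continuous h t) ->
  (forall t, a < t < b -> h t < 0) -> RInt h a b < 0.
Proof. intros. assert (RInt h a b < RInt (fun _ => 0) a b).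
  apply RInt_lt; auto. intros; apply continuous_const.
  rewrite RInt_const in H2. simpl in H2. unfold scal in H2; simpl in H2. unfold mult in H2; simpl in H2. lra. Qed.

Lemma norm2_B rA thA : 0 < rA -> norm2 (- (rA * cos thA)) (rA * sin thA) = rA.
Proof. intro. unfold norm2. replace ((- (rA * cos thA)) ^ 2) with ((rA * cos thA) ^ 2) by ring. fold (norm2 (rA * cos thA) (rA * sin thA)). apply norm2_polar; auto. Qed.

Definition arc_struct (x y : R -> R) (tA tB rA thA eta c : R) (ph : R -> R) :=
  eta < 1 /\ 0 < c /\ c ^ 2 = rA * (1 - eta * sin thA) /\
  ph tA = thA /\ ph tB = PI - thA /\
  (forall s t, tA <= s -> s < t -> t <= tB -> ph s < ph t) /\
  (forall t, continuity_pt ph t) /\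
  (forall t, tA <= t <= tB -> is_derive ph t (c / norm2 (x t) (y t) ^ 2)) /\
  (forall t, tA <= t <= tB ->
     x t = norm2 (x t) (y t) * cos (ph t) /\ y t = norm2 (x t) (y t) * sin (ph t) /\
     norm2 (x t) (y t) * (1 - eta * sin (ph t)) = c ^ 2).

Lemma arc_main rA thA x y tA tB : 0 < rA -> 0 < thA < PI/2 ->
  kepler_arc x y tA tB (rA * cos thA, rA * sin thA) (- (rA * cos thA), rA * sin thA) ->
  direct_arc x y tA tB ->
  exists eta c ph, arc_struct x y tA tB rA thA eta c ph.
Proof.
  intros hr hth [Htab [HA [HB [vx [vy HK]]]]] Hdir.
  injection HA; intros yA xA. injection HB; intros yB xB.
  pose proof PI_RGT_0 as hpi.
  pose proof (sin_thA_bounds thA hth) as hs.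
  assert (hcA : 0 < cos thA) by (apply cos_gt_0; lra).
  assert (ItA : tA <= tA <= tB) by lra. assert (ItB : tA <= tB <= tB) by lra.
  assert (rA_ : rr x y tA = rA) by (unfold rr; rewrite xA, yA; apply norm2_polar; auto).
  assert (rB_ : rr x y tB = rA) by (unfold rr; rewrite xB, yB; apply norm2_B; auto).
  assert (Hinit : x tA = rr x y tA * cos thA /\ y tA = rr x y tA * sin thA) by (rewrite rA_; auto).
  set (ph := phi x y vx vy tA tB thA).
  set (c := c0 x y vx vy tA).
  assert (Pol := polar x y vx vy tA tB thA Htab HK Hinit).
  fold ph in Pol.
  assert (dph : forall t, is_derive ph t (hh x y vx vy tA tB t)) by (intro; apply dphi; auto).
  assert (cph : forall t, continuity_pt ph t) by (intro; apply (deriv_cont _ _ _ (dph t))).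
  assert (ph0 : ph tA = thA) by apply phi_tA.
  pose proof (lrl_id x y vx vy tA tB HK tA ItA) as LA.
  pose proof (lrl_id x y vx vy tA tB HK tB ItB) as LB.
  rewrite (ex_const x y vx vy tA tB HK tB ItB), (ey_const x y vx vy tA tB HK tB ItB) in LB.
  fold c in LA, LB. rewrite xA, yA, rA_ in LA. rewrite xB, yB, rB_ in LB.
  set (e1 := ex x y vx vy tA tA) in *. set (e2 := ey x y vx vy tA tA) in *.
  assert (he1 : e1 = 0).
  { assert (rA * cos thA * e1 = 0) by lra.
    destruct (Rmult_integral _ _ H) as [h|h]; auto. nra. }
  set (eta := - e2).
  assert (Id : forall t, tA <= t <= tB -> rr x y t * (1 - eta * sin (ph t)) = c ^ 2).
  { intros t Ht. pose proof (lrl_id x y vx vy tA tB HK t Ht) as L.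
    rewrite (ex_const x y vx vy tA tB HK t Ht), (ey_const x y vx vy tA tB HK t Ht) in L.
    fold e1 e2 c in L. rewrite he1 in L. destruct (Pol t Ht) as [_ Py]. rewrite Py in L.
    unfold eta. lra. }
  assert (IdA : rA * (1 - eta * sin thA) = c ^ 2) by (rewrite <- rA_, <- ph0; apply Id; auto).
  destruct (Pol tB ItB) as [PxB PyB]. rewrite xB, rB_ in PxB. rewrite yB, rB_ in PyB.
  assert (cB : cos (ph tB) = - cos thA) by (apply Rmult_eq_reg_l with rA; lra).
  assert (sB : sin (ph tB) = sin thA) by (apply Rmult_eq_reg_l with rA; lra).
  assert (Hopp : forall t, tA <= t <= tB -> cos (ph t) = - cos thA -> sin (ph t) = - sin thA -> False).
  { intros t Ht hc hs'. apply Hdir. destruct (Pol t Ht) as [P1 P2].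
    apply (hull_opp _ (cos thA) (sin thA) rA (rr x y t)).
    exists tA. split; auto.
    exists t. split; auto. rewrite P1, P2, hc, hs'. f_equal; ring.
    auto. apply (rr_pos x y vx vy tA tB HK t Ht). }
  assert (IVT1 : forall v, Rmin (ph tA) (ph tB) <= v <= Rmax (ph tA) (ph tB) ->
      exists t, tA <= t <= tB /\ ph t = v).
  { intros v Hv. destruct (IVT_gen ph tA tB v cph Hv) as [t [Ht Hv']].
    rewrite Rmin_left, Rmax_right in Ht by lra. exists t; auto. }
  assert (hv : forall t, tA <= t <= tB -> hh x y vx vy tA tB t = c / rr x y t ^ 2)
    by (intros; apply hh_val; auto).
  assert (hcont : forall t, continuous (hh x y vx vy tA tB) t) by (intro; apply hh_cont; auto).
  assert (Hc : c <> 0).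
  { intro E. assert (ph tB - ph tA = 0).
    { unfold ph. rewrite phi_diff by auto. rewrite (RInt_ext _ (fun _ => 0)).
      rewrite RInt_const. simpl. unfold scal; simpl; unfold mult; simpl. ring.
      intros. unfold hh. fold c. rewrite E. unfold Rdiv. feq. ring. }
    rewrite ph0 in H. assert (ph tB = thA) by lra. rewrite H0 in cB. lra. }
  destruct (Rlt_or_le 0 c) as [cpos | cneg].
  -
    assert (Incr : forall s t, tA <= s -> s < t -> t <= tB -> ph s < ph t).
    { intros s t h1 h2 h3. assert (0 < RInt (hh x y vx vy tA tB) s t).
      { apply RInt_gt_0; auto. intros u Hu. rewrite hv by lra.
        apply Rdiv_lt_0_compat; auto. apply pow_lt, (rr_pos x y vx vy tA tB HK); lra.
        }
      unfold ph. rewrite <- (phi_diff x y vx vy tA tB thA Htab HK) in H. lra. }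
    assert (phBgt : thA < ph tB) by (rewrite <- ph0; apply Incr; lra).
    assert (phBlt : ph tB < thA + PI).
    { destruct (Rlt_or_le (ph tB) (thA + PI)); auto. exfalso.
      destruct (IVT1 (thA + PI)) as [t [Ht Hv]].
      rewrite Rmin_left, Rmax_right; lra.
      apply (Hopp t Ht). rewrite Hv, neg_cos; auto. rewrite Hv, neg_sin; auto. }
    assert (phBv : ph tB = PI - thA).
    { destruct (Rle_or_lt (ph tB) PI).
      apply cos_inj; try lra. rewrite cB, Rtrigo_facts.cos_pi_minus. auto.
      exfalso. assert (sin (ph tB) < 0) by (apply sin_lt_0; lra). lra. }
    assert (eta1 : eta < 1).
    { destruct (IVT1 (PI/2)) as [t [Ht Hv]]. rewrite Rmin_left, Rmax_right; lra.
      pose proof (Id t Ht). rewrite Hv, sin_PI2 in H. pose proof (rr_pos x y vx vy tA tB HK t Ht).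
      assert (0 < c ^ 2) by (apply pow_lt; auto). nra. }
    exists eta, c, ph. unfold arc_struct.
    refine (conj eta1 (conj cpos (conj _ (conj ph0 (conj phBv (conj Incr (conj cph (conj _ _)))))))).
    + lra.
    + intros. eapply D_eq. apply dph. rewrite hv by auto. reflexivity.
    + intros t Ht. split; [apply Pol; auto | split; [apply Pol; auto | apply Id; auto]].
  -
    exfalso.
    assert (cneg' : c < 0) by lra.
    assert (Decr : forall s t, tA <= s -> s < t -> t <= tB -> ph t < ph s).
    { intros s t h1 h2 h3. assert (RInt (hh x y vx vy tA tB) s t < 0).
      { apply RInt_neg; auto. intros u Hu. rewrite hv by lra.
        pose proof (rr_pos x y vx vy tA tB HK u ltac:(lra)).
        assert (0 < rr x y u ^ 2) by (apply pow_lt; auto).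
        unfold Rdiv. assert (0 < / rr x y u ^ 2) by (apply Rinv_0_lt_compat; auto). nra. }
      unfold ph. rewrite <- (phi_diff x y vx vy tA tB thA Htab HK) in H. lra. }
    assert (phBlt : ph tB < thA) by (rewrite <- ph0; apply Decr; lra).
    assert (phBgt : thA - PI < ph tB).
    { destruct (Rlt_or_le (thA - PI) (ph tB)); auto. exfalso.
      destruct (IVT1 (thA - PI)) as [t [Ht Hv]].
      rewrite Rmin_right, Rmax_left; lra.
      apply (Hopp t Ht).
      rewrite Hv, cos_minus, cos_PI, sin_PI; ring. rewrite Hv, sin_minus, cos_PI, sin_PI; ring. }
    destruct (Rle_or_lt (ph tB) 0).
    + assert (0 <= sin (- ph tB)) by (apply sin_ge_0; lra). rewrite sin_neg in H0. lra.
    + assert (0 < cos (ph tB)) by (apply cos_gt_0; lra). lra.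
Qed.


Lemma struct_range x y tA tB rA thA eta c ph t : tA < tB -> arc_struct x y tA tB rA thA eta c ph ->
  tA <= t <= tB -> thA <= ph t <= PI - thA.
Proof. intros Htab [_ [_ [_ [h0 [hB [Inc _]]]]]] Ht. split.
  destruct (Req_dec t tA). subst; lra. rewrite <- h0. left; apply Inc; lra.
  destruct (Req_dec t tB). subst; lra. rewrite <- hB. left; apply Inc; lra. Qed.

Lemma struct_mid x y tA tB rA thA eta c ph : tA < tB -> 0 < thA < PI/2 ->
  arc_struct x y tA tB rA thA eta c ph ->
  exists t, tA < t < tB /\ ph t = PI / 2.
Proof. intros Htab hth S. pose proof S as [_ [_ [_ [h0 [hB [Inc [Cph _]]]]]]].
  destruct (IVT_gen ph tA tB (PI/2) Cph) as [t [Ht Hv]].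
  rewrite h0, hB, Rmin_left, Rmax_right; lra.
  rewrite Rmin_left, Rmax_right in Ht by lra. exists t. split; auto.
  split. destruct (Req_dec t tA); [subst; lra | lra]. destruct (Req_dec t tB); [subst; lra | lra]. Qed.

Lemma eta_unique x y tA tB rA thA eta c ph eta' : 0 < rA -> tA < tB -> 0 < thA < PI/2 ->
  arc_struct x y tA tB rA thA eta c ph -> eta' < 1 -> follows_conic x y tA tB rA thA eta' -> eta' = eta.
Proof. intros hr Htab hth S he' [th [_ [Inc' [h0' [hB' Hx']]]]].
  pose proof S as [he [hc [hcc [_ [_ [_ [_ [_ Pol]]]]]]]].
  destruct (struct_mid x y tA tB rA thA eta c ph Htab hth S) as [t0 [Ht0 Hm]].
  assert (It0 : tA <= t0 <= tB) by lra.
  destruct (Pol t0 It0) as [Px [Py Id]]. rewrite Hm, cos_PI2 in Px. rewrite Hm, sin_PI2 in Py, Id.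
  pose proof PI_RGT_0.
  set (a := th t0).
  assert (Ha : thA < a < PI - thA).
  { split. rewrite <- h0'. apply Inc'; lra. rewrite <- hB'. apply Inc'; lra. }
  assert (sa : 0 < sin a) by (apply sin_gt_0; lra).
  assert (sa1 : sin a <= 1) by apply SIN_bound.
  pose proof (sin_thA_bounds thA hth) as hs.
  assert (D' : 0 < 1 - eta' * sin a) by (destruct (Rle_lt_dec 0 eta'); nra).
  assert (u' : 0 < 1 - eta' * sin thA) by (apply u_pos; auto).
  destruct (Hx' t0 It0) as [X Y]. fold a in X, Y. unfold conic_r in X, Y.
  assert (cr : 0 < rA * (1 - eta' * sin thA) / (1 - eta' * sin a)) by (apply Rdiv_lt_0_compat; nra).
  assert (ca : cos a = 0) by (rewrite Px in X; rewrite Rmult_0_r in X;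
    symmetry in X; destruct (Rmult_integral _ _ X); lra).
  assert (sa' : sin a = 1).
  { pose proof (sin2_cos2 a). unfold Rsqr in H0. rewrite ca in H0. nra. }
  rewrite sa' in Y, D'. rewrite !Rmult_1_r in Y, Py, D', Id. set (r := norm2 (x t0) (y t0)) in *.
  assert (E1 : r * (1 - eta') = rA * (1 - eta' * sin thA)).
  { replace (1 - eta' * 1) with (1 - eta') in Y by ring. rewrite <- Py, Y. field. lra. }
  assert (E2 : r * (1 - eta) = rA * (1 - eta * sin thA)) by lra.
  assert (r > 0).
  { pose proof (u_pos thA eta hth he). assert (0 < r * (1 - eta)) by nra. nra. }
  assert ((eta' - eta) * (r - rA * sin thA) = 0) by nra.
  destruct (Rmult_integral _ _ H1). lra.
  exfalso. assert (r = rA * sin thA) by lra.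
  rewrite H3 in E2. nra.
Qed.

Lemma struct_time x y tA tB rA thA eta c ph : 0 < rA -> tA < tB -> 0 < thA < PI/2 ->
  arc_struct x y tA tB rA thA eta c ph ->
  forall t, tA <= t <= tB -> Tf rA thA eta (ph t) = t - tA.
Proof. intros hr Htab hth S.
  pose proof S as [he [hc [hcc [h0 [hB [Inc [Cph [Dph Pol]]]]]]]].
  assert (Hc : forall t, tA <= t <= tB -> is_derive (fun t => Tf rA thA eta (ph t) - (t - tA)) t 0).
  { intros t Ht. eapply D_eq. apply D_minus.
    apply (is_derive_comp (Tf rA thA eta) ph t (G rA thA eta (ph t)) (c / norm2 (x t) (y t) ^ 2)).
    apply Tf_deriv; auto. apply Dph; auto.
    apply (D_minus (fun t => t) (fun _ => tA) t 1 0). apply (is_derive_id (K:=R_AbsRing)). apply D_const.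
    simpl. unfold scal; simpl; unfold mult; simpl.
    pose proof (struct_range x y tA tB rA thA eta c ph t Htab S Ht) as Hr.
    assert (sp : 0 <= sin (ph t)) by (apply sin_ge_0; lra).
    unfold G, Dt. rewrite Rabs_right by lra.
    pose proof (u_pos thA eta hth he).
    rewrite KK_c by auto. rewrite <- hcc. rewrite sqrt_pow2 by lra.
    destruct (Pol t Ht) as [_ [_ Id]].
    set (r := norm2 (x t) (y t)) in *. set (D := 1 - eta * sin (ph t)) in *.
    assert (0 < c ^ 2) by (apply pow_lt; auto).
    assert (r > 0). { assert (0 <= r) by apply sqrt_pos. destruct H1; auto. rewrite <- H1 in Id. lra. }
    assert (D > 0) by nra.
    assert (DE : D = c ^ 2 / r) by (field_simplify_eq; lra).
    rewrite DE. feq. field. lra. }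
  intros t Ht. pose proof (const_on _ tA tB Hc t Ht). simpl in H. rewrite h0 in H.
  rewrite Tf_thA in H. lra. Qed.


Definition dF (rA thA u t : R) := Rpower rA (3/2) * sqrt (1 - u * sin thA) *
  (2 * sin t - 3/2 * sin thA - 1/2 * u * sin thA * sin t) *
  / ((1 - u * sin t) * ((1 - u * sin t) * (1 - u * sin t))).

Lemma exp32 w : 0 < w -> exp (3/2 * ln w) = w * sqrt w.
Proof. intro. rewrite <- rp32 by auto. reflexivity. Qed.

Lemma dF_is rA thA u t : 0 < 1 - u * sin thA -> 1 - u * sin t <> 0 ->
  is_derive (fun u => TDS_integrand rA thA u t) u (dF rA thA u t).
Proof. intros h1 h2. unfold TDS_integrand. unfold Rpower at 2.
  auto_derive. split; auto. split; auto.
  replace (1 + - (u * sin thA)) with (1 - u * sin thA) by ring.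
  rewrite exp32 by auto. unfold dF. feq. field. lra.
Qed.

Lemma dF_cont2 rA thA u t : 0 < 1 - u * sin thA -> 1 - u * sin t <> 0 ->
  continuity_2d_pt (fun u v => dF rA thA u v) u t.
Proof. intros h1 h2. unfold dF.
  assert (Cs : continuity_2d_pt (fun _ v => sin v) u t).
  { apply (continuity_1d_2d_pt_comp sin (fun _ v => v)). apply continuity_sin. apply continuity_2d_pt_id2. }
  assert (CD : continuity_2d_pt (fun u v => 1 - u * sin v) u t).
  { apply continuity_2d_pt_minus. apply continuity_2d_pt_const.
    apply continuity_2d_pt_mult. apply continuity_2d_pt_id1. auto. }
  apply continuity_2d_pt_mult. apply continuity_2d_pt_mult. apply continuity_2d_pt_mult.
  apply continuity_2d_pt_const.
  apply (continuity_1d_2d_pt_comp sqrt (fun u _ => 1 - u * sin thA)). apply continuity_pt_sqrt; lra.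
  apply continuity_2d_pt_minus. apply continuity_2d_pt_const.
  apply continuity_2d_pt_mult. apply continuity_2d_pt_id1. apply continuity_2d_pt_const.
  apply continuity_2d_pt_minus. apply continuity_2d_pt_minus.
  apply continuity_2d_pt_mult. apply continuity_2d_pt_const. auto. apply continuity_2d_pt_const.
  apply continuity_2d_pt_mult. apply continuity_2d_pt_mult. apply continuity_2d_pt_mult.
  apply continuity_2d_pt_const. apply continuity_2d_pt_id1. apply continuity_2d_pt_const. auto.
  apply continuity_2d_pt_inv. apply continuity_2d_pt_mult. auto. apply continuity_2d_pt_mult; auto.
  repeat apply Rmult_integral_contrapositive_currified; auto.
Qed.

Lemma loc_lt1 eta : eta < 1 -> locally eta (fun u => u < 1).
Proof. intro h. assert (hp : 0 < (1 - eta)/2) by lra.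
  exists (mkposreal _ hp). intros y Hy. unfold ball in Hy; simpl in Hy.
  unfold AbsRing_ball, abs, minus, plus, opp in Hy; simpl in Hy.
  apply Rabs_lt_between' in Hy. lra. Qed.

Lemma loc2_lt1 eta t : eta < 1 -> locally_2d (fun u v => u < 1) eta t.
Proof. intro h. assert (hp : 0 < (1 - eta)/2) by lra.
  exists (mkposreal _ hp). intros u v Hu _. simpl in Hu.
  apply Rabs_lt_between' in Hu. lra. Qed.

Lemma TDS_F rA thA u : 0 < thA < PI/2 -> u < 1 ->
  TDS rA thA u = RInt (fun t => TDS_integrand rA thA u t) thA (PI - thA).
Proof. intros hth hu. rewrite (proj2 (TDS_facts rA thA u hth hu)).
  apply RInt_ext. intros x Hx. rewrite Rmin_left in Hx by lra. rewrite Rmax_right in Hx by lra.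
  symmetry. apply integrand_G. apply (sin_nonneg_mid thA); lra. Qed.

Lemma D_pos_mid thA u t : 0 < thA < PI/2 -> u < 1 -> thA <= t <= PI - thA -> 0 < 1 - u * sin t.
Proof. intros. pose proof (Dt_pos u t H0). unfold Dt in H2.
  rewrite Rabs_right in H2; auto. apply Rle_ge, (sin_nonneg_mid thA); auto. Qed.

Lemma TDS_deriv rA thA eta : 0 < thA < PI/2 -> eta < 1 ->
  is_derive (TDS rA thA) eta (RInt (dF rA thA eta) thA (PI - thA)).
Proof. intros hth he. pose proof PI_RGT_0.
  assert (Hab : thA < PI - thA) by lra.
  apply is_derive_ext_loc with (fun u => RInt (fun t => TDS_integrand rA thA u t) thA (PI - thA)).
  { apply filter_imp with (fun u => u < 1). intros u hu. symmetry; apply TDS_F; auto. apply loc_lt1; auto. }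
  replace (RInt (dF rA thA eta) thA (PI - thA)) with
    (RInt (fun t => Derive (fun u => TDS_integrand rA thA u t) eta) thA (PI - thA)).
  apply (is_derive_RInt_param (fun u t => TDS_integrand rA thA u t)).
  - apply filter_imp with (fun u => u < 1). intros u hu t Ht.
    rewrite Rmin_left, Rmax_right in Ht by lra.
    exists (dF rA thA u t). apply dF_is. apply u_pos; auto.
    pose proof (D_pos_mid thA u t hth hu Ht). lra. apply loc_lt1; auto.
  - intros t Ht. rewrite Rmin_left, Rmax_right in Ht by lra.
    assert (CD : continuity_2d_pt (fun u v => 1 - u * sin v) eta t).
    { apply continuity_2d_pt_minus. apply continuity_2d_pt_const.
      apply continuity_2d_pt_mult. apply continuity_2d_pt_id1.
      apply (continuity_1d_2d_pt_comp sin (fun _ v => v)). apply continuity_sin. apply continuity_2d_pt_id2. }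
    pose proof (D_pos_mid thA eta t hth he Ht).
    apply continuity_2d_pt_ext_loc with (fun u v => dF rA thA u v).
    + apply locally_2d_impl with (fun u v => u < 1 /\ 1 - u * sin v <> 0).
      apply locally_2d_forall. intros u v [hu hv]. symmetry. apply is_derive_unique.
      apply dF_is; auto. apply u_pos; auto.
      apply locally_2d_and. apply loc2_lt1; auto. apply continuity_2d_pt_neq_0; auto. lra.
    + apply dF_cont2. apply u_pos; auto. lra.
  - apply filter_imp with (fun u => u < 1). intros u hu.
    apply ex_RInt_ext with (G rA thA u). intros t Ht.
    rewrite Rmin_left, Rmax_right in Ht by lra.
    symmetry. apply integrand_G. apply (sin_nonneg_mid thA); lra. apply ex_RInt_G; auto.
    apply loc_lt1; auto.
  - apply RInt_ext. intros t Ht. rewrite Rmin_left, Rmax_right in Ht by lra.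
    apply is_derive_unique. apply dF_is. apply u_pos; auto.
    pose proof (D_pos_mid thA eta t hth he ltac:(lra)). lra.
Qed.

Lemma cont2_to_1 (f : R -> R -> R) x y : continuity_2d_pt f x y -> continuous (fun v => f x v) y.
Proof. intro H. apply continuity_pt_filterlim. apply continuity_pt_locally. intro eps.
  apply (locally_2d_1d_const_x (fun u v => Rabs (f u v - f x y) < eps)). apply H. Qed.

Lemma sin_ge_thA thA t : 0 < thA < PI/2 -> thA <= t <= PI - thA -> sin thA <= sin t.
Proof. intros h1 h2. destruct (Rle_lt_dec t (PI/2)) as [h3|h3].
  destruct (Req_dec thA t) as [h4|h4]. subst; lra. left. apply sin_increasing_1; lra.
  rewrite <- (sin_PI_x t). destruct (Req_dec thA (PI - t)) as [h4|h4]. rewrite h4; lra.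
  left. apply sin_increasing_1; lra. Qed.

Lemma bracket_pos s S u : 0 < s < 1 -> s <= S -> u < 1 -> 0 < 2 * S - 3/2 * s - 1/2 * u * s * S.
Proof. intros. destruct (Rle_lt_dec u 0).
  assert (0 <= - u * s * S) by (apply Rmult_le_pos; [apply Rmult_le_pos|]; lra). nra.
  assert ((1 - u) * s * S > 0) by (apply Rmult_gt_0_compat; [apply Rmult_gt_0_compat|]; lra). nra. Qed.

Lemma dF_pos rA thA u t : 0 < thA < PI/2 -> u < 1 -> thA <= t <= PI - thA -> 0 < dF rA thA u t.
Proof. intros hth hu Ht. unfold dF. pose proof (sin_thA_bounds thA hth).
  pose proof (sin_ge_thA thA t hth Ht). pose proof (D_pos_mid thA u t hth hu Ht).
  pose proof (u_pos thA u hth hu).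
  apply Rmult_lt_0_compat. apply Rmult_lt_0_compat. apply Rmult_lt_0_compat.
  unfold Rpower; apply exp_pos. apply sqrt_lt_R0; auto. apply bracket_pos; auto.
  apply Rinv_0_lt_compat. repeat apply Rmult_lt_0_compat; auto. Qed.

Lemma TDS_deriv_pos rA thA eta : 0 < thA < PI/2 -> eta < 1 -> 0 < RInt (dF rA thA eta) thA (PI - thA).
Proof. intros hth he. pose proof PI_RGT_0. apply RInt_gt_0. lra.
  intros; apply dF_pos; auto; lra.
  intros t Ht. apply (cont2_to_1 (dF rA thA)). apply dF_cont2. apply u_pos; auto.
  pose proof (D_pos_mid thA eta t hth he Ht). lra. Qed.

Lemma TDS_incr rA thA e1 e2 : 0 < thA < PI/2 -> e1 < e2 < 1 -> TDS rA thA e1 < TDS rA thA e2.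
Proof. intros hth he.
  destruct (MVT_gen (TDS rA thA) e1 e2 (fun u => RInt (dF rA thA u) thA (PI - thA))) as [c [Hc E]].
  - intros u Hu. rewrite Rmin_left, Rmax_right in Hu by lra. apply TDS_deriv; auto; lra.
  - intros u Hu. rewrite Rmin_left, Rmax_right in Hu by lra.
    apply (deriv_cont _ _ _ (TDS_deriv rA thA u hth ltac:(lra))).
  - rewrite Rmin_left, Rmax_right in Hc by lra.
    pose proof (TDS_deriv_pos rA thA c hth ltac:(lra)). nra. Qed.


Lemma cb z : - PI / 2 <= z <= PI/2 -> 1 - z^2/2 <= cos z.
Proof. intro. pose proof (cos_bound z 0 ltac:(lra) ltac:(lra)) as [H1 _].
  unfold cos_approx, cos_term in H1. simpl in H1. simpl. lra. Qed.

Lemma KK_eq rA thA eta : 0 < 1 - eta * sin thA ->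
  KK rA thA eta = Rpower rA (3/2) * ((1 - eta * sin thA) * sqrt (1 - eta * sin thA)).
Proof. intro. unfold KK. rewrite (rp32 (1 - eta * sin thA)); auto. Qed.

Lemma Rpow_pos a : 0 < Rpower a (3/2).
Proof. unfold Rpower; apply exp_pos. Qed.

Lemma TDS_pos rA thA eta : 0 < thA < PI/2 -> eta < 1 -> 0 < TDS rA thA eta.
Proof. intros. rewrite (proj2 (TDS_facts rA thA eta H H0)). pose proof PI_RGT_0.
  apply RInt_gt_0. lra. intros; apply G_pos; auto. intros; apply G_cont; auto. Qed.

Lemma lim_minus_inf rA thA : 0 < thA < PI/2 ->
  forall eps, 0 < eps -> exists M, forall eta, eta < M -> Rabs (TDS rA thA eta) < eps.
Proof. intros hth eps heps. pose proof PI_RGT_0.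
  pose proof (sin_thA_bounds thA hth) as hs. set (s := sin thA) in *.
  set (A := Rpower rA (3/2)). assert (hA : 0 < A) by apply Rpow_pos.
  set (L := (PI - thA - thA) * A / eps).
  assert (hL : 0 < L) by (unfold L; apply Rdiv_lt_0_compat; [apply Rmult_lt_0_compat|]; lra).
  exists (Rmin 0 ((1 - L^2)/s)). intros eta Heta.
  assert (e0 : eta < 0) by (pose proof (Rmin_l 0 ((1 - L^2)/s)); lra).
  assert (e1 : eta < (1 - L^2)/s) by (pose proof (Rmin_r 0 ((1 - L^2)/s)); lra).
  assert (he : eta < 1) by lra.
  pose proof (u_pos thA eta hth he) as hu. fold s in hu. set (u := 1 - eta * s) in *.
  assert (uL : L^2 < u).
  { unfold u. apply (Rmult_lt_compat_r s) in e1; [|lra]. unfold Rdiv in e1.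
    rewrite Rmult_assoc, Rinv_l in e1 by lra. lra. }
  assert (sqL : L < sqrt u).
  { rewrite <- (sqrt_pow2 L) by lra. apply sqrt_lt_1_alt. split; [apply pow2_ge_0|auto]. }
  assert (hsu : 0 < sqrt u) by lra.
  rewrite Rabs_right by (apply Rle_ge, Rlt_le, TDS_pos; auto).
  rewrite (proj2 (TDS_facts rA thA eta hth he)).
  assert (Bd : RInt (G rA thA eta) thA (PI - thA) <= RInt (fun _ => A / sqrt u) thA (PI - thA)).
  { apply RInt_le. lra. apply ex_RInt_G; auto. apply ex_RInt_const.
    intros t Ht. unfold G. rewrite KK_eq by auto. fold s u A.
    unfold Dt. rewrite Rabs_right by (apply Rle_ge, (sin_nonneg_mid thA); lra).
    pose proof (sin_ge_thA thA t hth ltac:(lra)). fold s in H0.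
    assert (u <= 1 - eta * sin t) by (unfold u; nra).
    apply Rle_trans with (A * (u * sqrt u) / u ^ 2).
    unfold Rdiv. apply Rmult_le_compat_l. apply Rmult_le_pos; [lra|]. apply Rmult_le_pos; lra.
    apply Rinv_le_contravar. apply pow_lt; lra. apply pow_incr; lra.
    right. replace (u ^ 2) with (u * (sqrt u * sqrt u)) by (rewrite sqrt_sqrt by lra; ring).
    field. lra. }
  rewrite RInt_const in Bd. simpl in Bd. unfold scal in Bd; simpl in Bd; unfold mult in Bd; simpl in Bd.
  eapply Rle_lt_trans. apply Bd.
  apply Rlt_le_trans with ((PI - thA - thA) * (A / L)).
  apply Rmult_lt_compat_l. lra. unfold Rdiv. apply Rmult_lt_compat_l; auto.
  apply Rinv_lt_contravar; nra.
  right. unfold L. field. split; lra.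
Qed.

Lemma lim_one rA thA : 0 < thA < PI/2 ->
  forall K, exists d, 0 < d /\ forall eta, 1 - d < eta < 1 -> K < TDS rA thA eta.
Proof. intros hth K. pose proof PI_RGT_0.
  pose proof (sin_thA_bounds thA hth) as hs. set (s := sin thA) in *.
  set (A := Rpower rA (3/2)). assert (hA : 0 < A) by apply Rpow_pos.
  set (C0 := A * ((1 - s) * sqrt (1 - s))).
  assert (hC0 : 0 < C0) by (unfold C0; apply Rmult_lt_0_compat; auto;
    apply Rmult_lt_0_compat; [lra | apply sqrt_lt_R0; lra]).
  set (q := 8 * C0 / (9 * (Rabs K + 1))).
  assert (hq : 0 < q) by (unfold q; pose proof (Rabs_pos K); apply Rdiv_lt_0_compat; lra).
  set (g := (PI/2 - thA)^2). assert (hg : 0 < g) by (unfold g; apply pow_lt; lra).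
  exists (Rmin 1 (Rmin g q)). split.
  { apply Rmin_pos; [lra| apply Rmin_pos; lra]. }
  intros eta Heta.
  pose proof (Rmin_l 1 (Rmin g q)). pose proof (Rmin_r 1 (Rmin g q)).
  pose proof (Rmin_l g q). pose proof (Rmin_r g q).
  set (w := 1 - eta). assert (hw : 0 < w < 1) by (unfold w; lra).
  assert (wg : w < g) by (unfold w; lra). assert (wq : w < q) by (unfold w; lra).
  assert (he : eta < 1) by lra. assert (he0 : 0 < eta) by lra.
  set (dl := sqrt w). assert (hdl : 0 < dl) by (apply sqrt_lt_R0; lra).
  assert (dlg : dl < PI/2 - thA).
  { unfold dl. rewrite <- (sqrt_pow2 (PI/2 - thA)) by lra. apply sqrt_lt_1_alt. unfold g in wg. lra. }
  assert (dlw : w <= dl).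
  { unfold dl. assert (sqrt w <= 1) by (rewrite <- sqrt_1; apply sqrt_le_1_alt; lra).
    pose proof (sqrt_sqrt w ltac:(lra)). pose proof (sqrt_pos w).
    assert (sqrt w * sqrt w <= sqrt w * 1) by (apply Rmult_le_compat_l; lra). lra. }
  assert (dl2 : dl ^ 2 = w) by (unfold dl; apply pow2_sqrt; lra).
  set (a := thA). set (b := PI - thA). set (p := PI/2 - dl). set (r := PI/2 + dl).
  pose proof (u_pos thA eta hth he) as hu. fold s in hu.
  set (m := 4 * C0 / (9 * w ^ 2)).
  assert (Gm : forall t, p <= t <= r -> m <= G rA thA eta t).
  { intros t Ht. unfold G. rewrite KK_eq by auto. fold s A.
    unfold Dt. rewrite Rabs_right by (apply Rle_ge, (sin_nonneg_mid thA); unfold p, r in Ht; lra).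
    assert (Dp : 0 < 1 - eta * sin t) by (apply (D_pos_mid thA); auto; unfold p, r in Ht; lra).
    assert (cs : 1 - (t - PI/2)^2/2 <= sin t).
    { rewrite <- cos_shift. replace (PI/2 - t) with (- (t - PI/2)) by ring. rewrite cos_neg.
      apply cb. unfold p, r in Ht; lra. }
    assert (tq : (t - PI/2)^2 <= w).
    { rewrite <- dl2. unfold p, r in Ht. assert (0 <= dl + (t - PI/2)) by lra.
      assert (0 <= dl - (t - PI/2)) by lra. nra. }
    set (u := 1 - eta * s) in *.
    assert (u1 : 1 - s <= u) by (unfold u; nra).
    assert (Nm : C0 <= A * (u * sqrt u)).
    { unfold C0. apply Rmult_le_compat_l; [lra|]. apply Rmult_le_compat; try lra.
      apply sqrt_pos. apply sqrt_le_1_alt; lra. }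
    assert (S1 : sin t <= 1) by apply SIN_bound.
    assert (Db : 1 - eta * sin t <= 3/2 * w).
    { assert (0 <= (1 - eta) * (1 - sin t)) by (apply Rmult_le_pos; lra). assert (w = 1 - eta) by reflexivity. lra. }
    apply Rle_trans with (C0 / (1 - eta * sin t) ^ 2).
    - assert (Em : m = C0 / ((3/2*w)^2)) by (unfold m; field; lra). rewrite Em.
      unfold Rdiv. apply Rmult_le_compat_l; [lra|]. apply Rinv_le_contravar. apply pow_lt; lra.
      apply pow_incr; lra.
    - unfold Rdiv. apply Rmult_le_compat_r. left; apply Rinv_0_lt_compat, pow_lt; lra. auto. }
  assert (hp : a < p) by (unfold a, p; lra). assert (hr : r < b) by (unfold r, b; lra).
  assert (hpr : p < r) by (unfold p, r; lra).
  unfold a, b in *. clear a b.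
  rewrite (proj2 (TDS_facts rA thA eta hth he)).
  rewrite <- (RInt_Chasles (V:=R_CompleteNormedModule) (G rA thA eta) thA p (PI - thA)) by (apply ex_RInt_G; auto).
  rewrite <- (RInt_Chasles (V:=R_CompleteNormedModule) (G rA thA eta) p r (PI - thA)) by (apply ex_RInt_G; auto).
  simpl. unfold plus; simpl.
  assert (I1 : 0 <= RInt (G rA thA eta) thA p).
  { apply RInt_ge_0. lra. apply ex_RInt_G; auto. intros; left; apply G_pos; auto. }
  assert (I3 : 0 <= RInt (G rA thA eta) r (PI - thA)).
  { apply RInt_ge_0. lra. apply ex_RInt_G; auto. intros; left; apply G_pos; auto. }
  assert (I2 : RInt (fun _ => m) p r <= RInt (G rA thA eta) p r).
  { apply RInt_le. lra. apply ex_RInt_const. apply ex_RInt_G; auto. intros; apply Gm; lra. }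
  rewrite RInt_const in I2. simpl in I2. unfold scal in I2; simpl in I2; unfold mult in I2; simpl in I2.
  assert (K1 : Rabs K + 1 < m * (r - p)).
  { unfold m. replace (r - p) with (2 * dl) by (unfold r, p; ring).
    apply Rlt_le_trans with (8 * C0 / (9 * w)).
    - unfold q in wq. pose proof (Rabs_pos K).
      apply (Rmult_lt_compat_r (9 * (Rabs K + 1))) in wq; [|lra].
      unfold Rdiv in wq. rewrite Rmult_assoc, Rinv_l in wq by lra.
      apply (Rmult_lt_reg_r (9 * w)). lra. unfold Rdiv. rewrite Rmult_assoc, Rinv_l by lra. lra.
    - replace (4 * C0 / (9 * w ^ 2) * (2 * dl)) with (8 * C0 / (9 * w) * (dl / w)) by (field; lra).
      rewrite <- (Rmult_1_r (8 * C0 / (9 * w))) at 1. apply Rmult_le_compat_l.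
      apply Rlt_le, Rdiv_lt_0_compat; lra.
      apply (Rmult_le_reg_r w). lra. unfold Rdiv. rewrite Rmult_assoc, Rinv_l by lra. lra. }
  pose proof (Rle_abs K). lra.
Qed.


Lemma struct_r x y tA tB rA thA eta c ph t : arc_struct x y tA tB rA thA eta c ph ->
  tA <= t <= tB -> 0 < 1 - eta * sin (ph t) /\
  norm2 (x t) (y t) = c ^ 2 / (1 - eta * sin (ph t)).
Proof. intros S Ht. pose proof S as [_ [hc [_ [_ [_ [_ [_ [_ Pol]]]]]]]].
  destruct (Pol t Ht) as [_ [_ Id]]. set (r := norm2 (x t) (y t)) in *.
  assert (0 < c ^ 2) by (apply pow_lt; auto).
  assert (r > 0). { assert (0 <= r) by apply sqrt_pos. destruct H0; auto. rewrite <- H0 in Id. lra. }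
  assert (0 < 1 - eta * sin (ph t)) by nra. split; auto. rewrite <- Id. field. lra. Qed.

Lemma struct_follows x y tA tB rA thA eta c ph : 0 < rA -> tA < tB -> 0 < thA < PI/2 ->
  arc_struct x y tA tB rA thA eta c ph -> follows_conic x y tA tB rA thA eta.
Proof. intros hr Htab hth S. pose proof S as [he [hc [hcc [h0 [hB [Inc [Cph [_ Pol]]]]]]]].
  exists ph. split; [|split; [|split; [|split]]]; auto.
  apply cont_interval; auto.
  intros t Ht. destruct (struct_r x y tA tB rA thA eta c ph t S Ht) as [hD hr'].
  destruct (Pol t Ht) as [Px [Py _]]. unfold conic_r. rewrite <- hcc. rewrite <- hr'. auto. Qed.

Theorem proposition1 (rA thA : R) (hr : 0 < rA) (hth : 0 < thA < PI / 2) :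
  let A := (rA * cos thA, rA * sin thA) in
  let B := (- (rA * cos thA), rA * sin thA) in
  (forall eta, eta < 1 ->
     exists (x y : R -> R) (tA tB : R),
       kepler_arc x y tA tB A B /\ direct_arc x y tA tB /\
       follows_conic x y tA tB rA thA eta) /\
  (forall (x y : R -> R) (tA tB : R),
     kepler_arc x y tA tB A B -> direct_arc x y tA tB ->
     exists eta, eta < 1 /\ follows_conic x y tA tB rA thA eta /\
       (forall eta', eta' < 1 -> follows_conic x y tA tB rA thA eta' -> eta' = eta)) /\
  (forall eta (x1 y1 x2 y2 : R -> R) (tA1 tB1 tA2 tB2 : R), eta < 1 ->
     kepler_arc x1 y1 tA1 tB1 A B -> direct_arc x1 y1 tA1 tB1 ->
     follows_conic x1 y1 tA1 tB1 rA thA eta ->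
     kepler_arc x2 y2 tA2 tB2 A B -> direct_arc x2 y2 tA2 tB2 ->
     follows_conic x2 y2 tA2 tB2 rA thA eta ->
     tB2 - tA2 = tB1 - tA1 /\
     forall s, 0 <= s <= tB1 - tA1 ->
       x2 (tA2 + s) = x1 (tA1 + s) /\ y2 (tA2 + s) = y1 (tA1 + s)) /\
  (forall eta, eta < 1 ->
     exists pr : Riemann_integrable (TDS_integrand rA thA eta) thA (PI - thA),
       RiemannInt pr = TDS rA thA eta) /\
  (forall eta (x y : R -> R) (tA tB : R), eta < 1 ->
     kepler_arc x y tA tB A B -> direct_arc x y tA tB ->
     follows_conic x y tA tB rA thA eta ->
     tB - tA = TDS rA thA eta) /\
  (forall eta1 eta2, eta1 < eta2 < 1 -> TDS rA thA eta1 < TDS rA thA eta2) /\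
  (forall eta, eta < 1 ->
     exists l, derivable_pt_lim (fun e => TDS rA thA e) eta l /\ 0 < l) /\
  (forall eps, 0 < eps -> exists M, forall eta, eta < M ->
     Rabs (TDS rA thA eta) < eps) /\
  (forall K, exists d, 0 < d /\ forall eta, 1 - d < eta < 1 ->
     K < TDS rA thA eta).
Proof.
  intros A B. unfold A, B; clear A B.
  assert (Struct : forall eta x y tA tB, eta < 1 ->
     kepler_arc x y tA tB (rA * cos thA, rA * sin thA) (- (rA * cos thA), rA * sin thA) ->
     direct_arc x y tA tB -> follows_conic x y tA tB rA thA eta ->
     exists c ph, arc_struct x y tA tB rA thA eta c ph).
  { intros eta x y tA tB he K D F. destruct (arc_main rA thA x y tA tB hr hth K D) as [e [c [ph S]]].
    assert (eta = e) by (apply (eta_unique x y tA tB rA thA e c ph eta hr (proj1 K) hth S he F)).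
    subst. exists c, ph; auto. }
  assert (Time : forall eta x y tA tB c ph, tA < tB -> arc_struct x y tA tB rA thA eta c ph ->
     tB - tA = Tf rA thA eta (PI - thA)).
  { intros eta x y tA tB c ph Htab S. pose proof (struct_time x y tA tB rA thA eta c ph hr Htab hth S tB ltac:(lra)).
    pose proof S as [_ [_ [_ [_ [hB _]]]]]. rewrite hB in H. lra. }
  split; [|split; [|split; [|split; [|split; [|split; [|split; [|split]]]]]]].
  - intros eta he. apply existence; auto.
  - intros x y tA tB K D. destruct (arc_main rA thA x y tA tB hr hth K D) as [e [c [ph S]]].
    exists e. split. apply S. split. apply (struct_follows x y tA tB rA thA e c ph hr (proj1 K) hth S).
    intros eta' he' F. apply (eta_unique x y tA tB rA thA e c ph eta' hr (proj1 K) hth S he' F).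
  - intros eta x1 y1 x2 y2 tA1 tB1 tA2 tB2 he K1 D1 F1 K2 D2 F2.
    destruct (Struct eta x1 y1 tA1 tB1 he K1 D1 F1) as [c1 [ph1 S1]].
    destruct (Struct eta x2 y2 tA2 tB2 he K2 D2 F2) as [c2 [ph2 S2]].
    pose proof (Time _ _ _ _ _ _ _ (proj1 K1) S1) as T1.
    pose proof (Time _ _ _ _ _ _ _ (proj1 K2) S2) as T2.
    assert (Ec : c1 = c2).
    { pose proof S1 as [_ [h1 [e1 _]]]. pose proof S2 as [_ [h2 [e2 _]]].
      assert (c1 ^ 2 = c2 ^ 2) by lra. assert ((c1 - c2) * (c1 + c2) = 0) by nra.
      destruct (Rmult_integral _ _ H0); lra. }
    subst c2.
    split. lra.
    intros s Hs.
    assert (I1 : tA1 <= tA1 + s <= tB1) by lra. assert (I2 : tA2 <= tA2 + s <= tB2) by lra.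
    pose proof (struct_time x1 y1 tA1 tB1 rA thA eta c1 ph1 hr (proj1 K1) hth S1 _ I1) as P1.
    pose proof (struct_time x2 y2 tA2 tB2 rA thA eta c1 ph2 hr (proj1 K2) hth S2 _ I2) as P2.
    assert (Eph : ph2 (tA2 + s) = ph1 (tA1 + s)) by (apply (Tf_inj rA thA eta); auto; lra).
    destruct (struct_r _ _ _ _ _ _ _ _ _ _ S1 I1) as [_ R1].
    destruct (struct_r _ _ _ _ _ _ _ _ _ _ S2 I2) as [_ R2].
    pose proof S1 as [_ [_ [_ [_ [_ [_ [_ [_ Pol1]]]]]]]].
    pose proof S2 as [_ [_ [_ [_ [_ [_ [_ [_ Pol2]]]]]]]].
    destruct (Pol1 _ I1) as [X1 [Y1 _]]. destruct (Pol2 _ I2) as [X2 [Y2 _]].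
    split.
    + rewrite X2, R2, Eph, <- R1. symmetry. exact X1.
    + rewrite Y2, R2, Eph, <- R1. symmetry. exact Y1.
  - intros eta he. apply (proj1 (TDS_facts rA thA eta hth he)).
  - intros eta x y tA tB he K D F.
    destruct (Struct eta x y tA tB he K D F) as [c [ph S]].
    rewrite (Time _ _ _ _ _ _ _ (proj1 K) S). rewrite (proj2 (TDS_facts rA thA eta hth he)).
    reflexivity.
  - intros e1 e2 he. apply TDS_incr; auto.
  - intros eta he. exists (RInt (dF rA thA eta) thA (PI - thA)). split.
    apply is_derive_Reals. apply TDS_deriv; auto. apply TDS_deriv_pos; auto.
  - apply lim_minus_inf; auto.
  - apply lim_one; auto.
Qed.
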